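(* Let $\mathcal R_0(p)_i=\sum_{k,\ell\ge0,\ \min\{k,\ell\}\le i\le\max\{k,\ell\}}\frac{p_kp_\ell}{1+|k-\ell|}$ for $p\in\mathcal M_1^+$. A probability measure $p\in\mathcal M_1^+$ is a fixed point of $\mathcal R_0$ if and only if its mean $m=\sum_{k\ge0}k\,p_k$ is finite, $p_{\lfloor m\rfloor}=\lfloor m\rfloor+1-m$, $p_{\lceil m\rceil}=m+1-\lceil m\rceil$, and $p_k=0$ for all other $k$ (including the case that $m$ is an integer and $p_m=1$).
   Context: $\mathcal M_1^+$ is the set of probability measures on $\mathbb N_0$, identified with nonnegative sequences $(p_k)_{k\ge0}$ summing to $1$. *)

(* Defs.v *)
From Stdlib Require Import Reals Lra Lia ZArith Arith.
From Coquelicot Require Import Coquelicot.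
Open Scope R_scope.

Definition is_prob (p : nat -> R) : Prop :=
  (forall k, 0 <= p k) /\ is_series p 1.

Definition natdist (k l : nat) : nat := ((k - l) + (l - k))%nat.

Definition R0_term (p : nat -> R) (i k l : nat) : R :=
  if ((Nat.min k l <=? i) && (i <=? Nat.max k l))%bool
  then p k * p l / (1 + INR (natdist k l))
  else 0.

(* R_0(p)_i (named Rcal0, since R0 is Stdlib zero) as an iterated series of nonnegative terms (absolutely summable
   since the terms are bounded by p_k p_l) *)
Definition Rcal0 (p : nat -> R) (i : nat) : R :=
  Series (fun k => Series (fun l => R0_term p i k l)).

Definition floor_nat (x : R) : nat := Z.to_nat (Int_part x).
Definition ceil_nat (x : R) : nat := Z.to_nat (- Int_part (- x)).

Definition mean_finite (p : nat -> R) : Prop := ex_series (fun k => INR k * p k).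
Definition mean (p : nat -> R) : R := Series (fun k => INR k * p k).

(* Main.v *)
Require Import Defs.
From Stdlib Require Import Reals Lra Lia.
From Coquelicot Require Import Coquelicot.
Open Scope R_scope.

Lemma sum_pt (n : nat) (c : R) (N : nat) :
  sum_n (fun k => if Nat.eqb k n then c else 0) N = if Nat.ltb N n then 0 else c.
Proof.
  induction N.
  - rewrite sum_O. destruct n; simpl; reflexivity.
  - rewrite sum_Sn, IHN. change plus with Rplus.
    destruct (Nat.eqb_spec (S N) n); destruct (Nat.ltb_spec N n); destruct (Nat.ltb_spec (S N) n);
      try lia; lra.
Qed.

Lemma is_series_pt (n : nat) (c : R) :
  is_series (fun k => if Nat.eqb k n then c else 0) c.
Proof.
  assert (H : is_lim_seq (sum_n (fun k => if Nat.eqb k n then c else 0)) c).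
  { apply is_lim_seq_ext_loc with (u := fun _ => c).
    - exists n. intros N HN. rewrite sum_pt. destruct (Nat.ltb_spec N n); [lia|reflexivity].
    - apply is_lim_seq_const. }
  exact H.
Qed.

Lemma is_series_pt' (f : nat -> R) (n : nat) :
  (forall k, k <> n -> f k = 0) -> is_series f (f n).
Proof.
  intros H. apply is_series_ext with (a := fun k => if Nat.eqb k n then f n else 0).
  - intros k. destruct (Nat.eqb_spec k n). subst; auto. rewrite H; auto.
  - apply is_series_pt.
Qed.

Lemma is_series_2pt (f : nat -> R) (n : nat) :
  (forall k, k <> n -> k <> S n -> f k = 0) -> is_series f (f n + f (S n)).
Proof.
  intros H.
  apply is_series_ext with (a := fun k => plus (if Nat.eqb k n then f n else 0) (if Nat.eqb k (S n) then f (S n) else 0)).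
  - intros k. change plus with Rplus. destruct (Nat.eqb_spec k n); destruct (Nat.eqb_spec k (S n)); subst; try lia.
    lra. lra. rewrite H; auto. lra.
  - apply (is_series_plus _ _ (f n) (f (S n))); apply is_series_pt.
Qed.

Lemma series_nonneg_zero (h : nat -> R) : (forall k, 0 <= h k) -> is_series h 0 -> forall k, h k = 0.
Proof.
  intros H0 Hs k.
  assert (Series (fun l => if Nat.eqb l k then h k else 0) <= Series h).
  { apply Series_le. intros l. destruct (Nat.eqb_spec l k); subst; split; try lra; auto.
    eexists; eauto. }
  assert (E : Series (fun l => if Nat.eqb l k then h k else 0) = h k).
  { apply is_series_unique. apply is_series_pt. }
  rewrite E in H.
  rewrite (is_series_unique _ _ Hs) in H. specialize (H0 k). lra.
Qed.

Lemma Series_zero (f : nat -> R) : (forall k, f k = 0) -> Series f = 0.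
Proof.
  intros H. rewrite (is_series_unique _ _ (is_series_pt' f 0 (fun k _ => H k))). auto.
Qed.

Lemma Series_2pt (f : nat -> R) (n : nat) :
  (forall k, k <> n -> k <> S n -> f k = 0) -> Series f = f n + f (S n).
Proof. intros H; apply is_series_unique, is_series_2pt; auto. Qed.

Lemma R0_term_zero_l p i k l : p k = 0 -> R0_term p i k l = 0.
Proof. intros H; unfold R0_term; rewrite H; destruct (_ && _)%bool; lra. Qed.
Lemma R0_term_zero_r p i k l : p l = 0 -> R0_term p i k l = 0.
Proof. intros H; unfold R0_term; rewrite H; destruct (_ && _)%bool; lra. Qed.

Lemma fixed_2pt (p : nat -> R) (n : nat) :
  (forall k, k <> n -> k <> S n -> p k = 0) -> p n + p (S n) = 1 ->
  forall i, Rcal0 p i = p i.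
Proof.
  intros Hz Hs i. unfold Rcal0.
  rewrite (Series_2pt _ n).
  2:{ intros k H1 H2. apply Series_zero. intros l. apply R0_term_zero_l; auto. }
  rewrite (Series_2pt _ n).
  2:{ intros k H1 H2. apply R0_term_zero_r; auto. }
  rewrite (Series_2pt _ n).
  2:{ intros k H1 H2. apply R0_term_zero_r; auto. }
  unfold R0_term, natdist.
  replace (Nat.min n n) with n by lia. replace (Nat.max n n) with n by lia.
  replace (Nat.min n (S n)) with n by lia. replace (Nat.max n (S n)) with (S n) by lia.
  replace (Nat.min (S n) n) with n by lia. replace (Nat.max (S n) n) with (S n) by lia.
  replace (Nat.min (S n) (S n)) with (S n) by lia. replace (Nat.max (S n) (S n)) with (S n) by lia.
  replace (n - n + (n - n))%nat with 0%nat by lia.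
  replace (n - S n + (S n - n))%nat with 1%nat by lia.
  replace (S n - n + (n - S n))%nat with 1%nat by lia.
  replace (S n - S n + (S n - S n))%nat with 0%nat by lia.
  simpl INR.
  destruct (Nat.leb_spec n i); destruct (Nat.leb_spec i n); destruct (Nat.leb_spec (S n) i);
    destruct (Nat.leb_spec i (S n)); simpl; try lia.
  - assert (i = n) by lia; subst. field_simplify. 
    replace (p (S n)) with (1 - p n) by lra. field.
  - assert (i = S n) by lia; subst.
    replace (p n) with (1 - p (S n)) by lra. field.
  - rewrite Hz by lia. lra.
  - rewrite Hz by lia. lra.
Qed.

Lemma Int_part_eq (z : Z) (r : R) : IZR z <= r -> r < IZR z + 1 -> Int_part r = z.
Proof.
  intros H1 H2. unfold Int_part.
  rewrite <- (tech_up r (z + 1)); [lia| rewrite plus_IZR; simpl; lra | rewrite plus_IZR; simpl; lra].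
Qed.

Lemma ceil_floor_rel (m : R) : 0 <= m ->
  (ceil_nat m = floor_nat m \/ ceil_nat m = S (floor_nat m)).
Proof.
  intros Hm. unfold ceil_nat, floor_nat.
  destruct (base_Int_part m) as [A B]. destruct (base_Int_part (-m)) as [C D].
  set (z := Int_part m) in *. set (w := Int_part (-m)) in *.
  assert (z0 : (-1 < z)%Z) by (apply lt_IZR; simpl; lra).
  assert (E1 : (z <= - w)%Z) by (apply le_IZR; rewrite opp_IZR; lra).
  assert (E2 : (- w < z + 2)%Z) by (apply lt_IZR; rewrite opp_IZR, plus_IZR; simpl; lra).
  lia.
Qed.

Lemma div_bounds (x d : R) : 0 <= x -> 0 <= d -> 0 <= x / (1 + d) <= x.
Proof.
  intros Hx Hd. set (y := x / (1 + d)).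
  assert (E : x = y * (1 + d)) by (unfold y; field; lra).
  assert (0 <= y) by (unfold y; apply Rdiv_le_0_compat; lra).
  split; nra.
Qed.

Lemma support_min (p : nat -> R) (hp : is_prob p) (a : nat) (Ha : p a <> 0)
  (Hlt : forall k, (k < a)%nat -> p k = 0) (Hfix : Rcal0 p a = p a) :
  forall l, (S (S a) <= l)%nat -> p l = 0.
Proof.
  destruct hp as [Hpos Hser].
  set (g := fun l => p l / (1 + INR (natdist a l))).
  assert (Hg : forall l, 0 <= g l <= p l) by (intros l; apply div_bounds; auto; apply pos_INR).
  assert (exg : ex_series g).
  { apply (@ex_series_le _ R_CompleteNormedModule g p). intros l. unfold norm; simpl. unfold abs; simpl.
    rewrite Rabs_pos_eq; apply Hg. eexists; eauto. }
  set (Sg := Series g).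
  assert (Hga : g a = p a) by (unfold g, natdist; replace (a - a + (a - a))%nat with 0%nat by lia; simpl; field).
  assert (HF : forall k, Series (fun l => R0_term p a k l) =
                p a * g k + (if Nat.eqb k a then p a * (Sg - g a) else 0)).
  { intros k. destruct (Nat.ltb_spec k a) as [Hk|Hk].
    - rewrite Series_zero by (intros l; apply R0_term_zero_l; auto).
      destruct (Nat.eqb_spec k a); [lia|]. unfold g. rewrite (Hlt k Hk). unfold Rdiv. ring.
    - destruct (Nat.eqb_spec k a) as [Hka|Hka].
      + subst k. rewrite (Series_ext _ (fun l => p a * g l)).
        * rewrite Series_scal_l. unfold Sg. ring.
        * intros l. unfold R0_term, g. 
          destruct (Nat.leb_spec (Nat.min a l) a); [|lia]. destruct (Nat.leb_spec a (Nat.max a l)); [|lia].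
          simpl. field. apply Rgt_not_eq. pose proof (pos_INR (natdist a l)). lra.
      + assert (Hz : forall l, l <> a -> R0_term p a k l = 0).
        { intros l Hl. destruct (Nat.ltb_spec l a).
          -- apply R0_term_zero_r; auto.
          -- unfold R0_term. destruct (Nat.leb_spec (Nat.min k l) a); [lia|]. simpl. reflexivity. }
        assert (E : Series (fun l => R0_term p a k l) = R0_term p a k a)
          by (apply is_series_unique, is_series_pt'; auto).
        rewrite E.
        unfold R0_term, g.
        destruct (Nat.leb_spec (Nat.min k a) a); [|lia]. destruct (Nat.leb_spec a (Nat.max k a)); [|lia].
        simpl. replace (natdist k a) with (natdist a k) by (unfold natdist; lia). field.
        apply Rgt_not_eq. pose proof (pos_INR (natdist a k)). lra. }
  assert (HR : Rcal0 p a = p a * (2 * Sg - p a)).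
  { unfold Rcal0. rewrite (Series_ext _ _ HF).
    rewrite Series_plus.
    - rewrite Series_scal_l.
      assert (E : Series (fun k => if Nat.eqb k a then p a * (Sg - g a) else 0) = p a * (Sg - g a))
        by (apply is_series_unique, is_series_pt).
      rewrite E.
      rewrite Hga. fold Sg. ring.
    - exists (p a * Sg). apply (is_series_scal_l (p a) g Sg). apply Series_correct; auto.
    - eexists; apply is_series_pt. }
  assert (H2 : 2 * Sg - p a = 1).
  { rewrite HR in Hfix. apply Rmult_eq_reg_l with (p a); auto. lra. }
  set (h := fun l => p l - 2 * g l + (if Nat.eqb l a then p a else 0)).
  assert (Hh0 : is_series h (plus (plus 1 (scal (-2) Sg)) (p a))).
  { apply is_series_ext with (a := fun l => plus (plus (p l) (scal (-2) (g l))) (if Nat.eqb l a then p a else 0)).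
    - intros l. unfold h. change plus with Rplus. change scal with Rmult. simpl. ring.
    - apply (@is_series_plus R_AbsRing R_NormedModule). apply (@is_series_plus R_AbsRing R_NormedModule); auto.
      apply (@is_series_scal_l R_AbsRing R_NormedModule).
      apply Series_correct; auto. apply is_series_pt. }
  assert (E0 : plus (plus 1 (scal (-2) Sg)) (p a) = 0).
  { change plus with Rplus. change scal with Rmult. simpl. lra. }
  assert (Hh : is_series h 0) by (rewrite <- E0; exact Hh0).
  assert (Hhpos : forall l, 0 <= h l).
  { intros l. unfold h. destruct (Nat.eqb_spec l a).
    - subst. rewrite Hga. lra.
    - destruct (Nat.ltb_spec l a).
      + unfold g. rewrite Hlt by auto. unfold Rdiv. lra.
      + unfold g. assert (1 <= INR (natdist a l)).
        { replace 1 with (INR 1) by reflexivity. apply le_INR. unfold natdist. lia. }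
        set (y := p l / (1 + INR (natdist a l))).
        assert (E : p l = y * (1 + INR (natdist a l))) by (unfold y; field; lra).
        assert (0 <= y) by (unfold y; apply Rdiv_le_0_compat; [apply Hpos|lra]).
        rewrite E at 1. nra. }
  intros l Hl. pose proof (series_nonneg_zero h Hhpos Hh l) as Z.
  unfold h, g in Z. destruct (Nat.eqb_spec l a); [lia|].
  assert (2 <= INR (natdist a l)).
  { replace 2 with (INR 2) by (simpl; lra). apply le_INR. unfold natdist. lia. }
  set (y := p l / (1 + INR (natdist a l))) in *.
  assert (E : p l = y * (1 + INR (natdist a l))) by (unfold y; field; lra).
  assert (y = 0) by nra. rewrite E. nra.
Qed.

Lemma exists_min (p : nat -> R) (n : nat) : p n <> 0 ->
  exists a, p a <> 0 /\ forall k, (k < a)%nat -> p k = 0.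
Proof.
  revert n. induction n as [n IH] using (well_founded_induction Wf_nat.lt_wf). intros Hn.
  destruct (Classical_Prop.classic (exists k, (k < n)%nat /\ p k <> 0)) as [[k [Hk1 Hk2]]|Hno].
  - exact (IH k Hk1 Hk2).
  - exists n. split; auto. intros k Hk. destruct (Req_dec (p k) 0); auto. exfalso; apply Hno; eauto.
Qed.

Lemma floor_nat_eq (a : nat) (t : R) : 0 <= t < 1 -> floor_nat (INR a + t) = a.
Proof.
  intros Ht. unfold floor_nat. rewrite (Int_part_eq (Z.of_nat a)); [lia| |]; rewrite <- INR_IZR_INZ; lra.
Qed.

Lemma ceil_nat_eq0 (a : nat) : ceil_nat (INR a + 0) = a.
Proof.
  unfold ceil_nat. rewrite (Int_part_eq (- Z.of_nat a)); [lia| |]; rewrite opp_IZR, <- INR_IZR_INZ; lra.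
Qed.

Lemma ceil_nat_eq1 (a : nat) (t : R) : 0 < t < 1 -> ceil_nat (INR a + t) = S a.
Proof.
  intros Ht. unfold ceil_nat. rewrite (Int_part_eq (- Z.of_nat a - 1)); [lia| |];
  rewrite minus_IZR, opp_IZR, <- INR_IZR_INZ; simpl; lra.
Qed.

Theorem proposition4 (p : nat -> R) (hp : is_prob p) :
  (forall i : nat, Rcal0 p i = p i) <->
  (mean_finite p /\
   p (floor_nat (mean p)) = INR (floor_nat (mean p)) + 1 - mean p /\
   p (ceil_nat (mean p)) = mean p + 1 - INR (ceil_nat (mean p)) /\
   (forall k : nat, k <> floor_nat (mean p) -> k <> ceil_nat (mean p) -> p k = 0)).
Proof.
  pose proof hp as [Hpos Hser]. split.
  - intros Hfix.
    assert (Hex : exists n, p n <> 0).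
    { destruct (Classical_Prop.classic (exists n, p n <> 0)) as [H|H]; auto. exfalso.
      assert (Series p = 0) by (apply Series_zero; intros k; destruct (Req_dec (p k) 0); auto; exfalso; eauto).
      rewrite (is_series_unique _ _ Hser) in H0. lra. }
    destruct Hex as [n Hn]. destruct (exists_min p n Hn) as [a [Ha Hlt]].
    pose proof (support_min p hp a Ha Hlt (Hfix a)) as Hsup.
    assert (Hz : forall k, k <> a -> k <> S a -> p k = 0).
    { intros k H1 H2. destruct (Nat.ltb_spec k a); auto. apply Hsup; lia. }
    set (t := p (S a)).
    assert (Hsum : p a + t = 1).
    { rewrite <- (is_series_unique _ _ Hser). symmetry. apply Series_2pt; auto. }
    assert (Hm : is_series (fun k => INR k * p k) (INR a * p a + INR (S a) * t)).
    { apply (is_series_2pt (fun k => INR k * p k)). intros k H1 H2. rewrite Hz; auto; ring. }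
    assert (Hmean : mean p = INR a + t).
    { unfold mean. rewrite (is_series_unique _ _ Hm). rewrite S_INR. replace (p a) with (1 - t) by lra. ring. }
    assert (Ht0 : 0 <= t) by apply Hpos.
    assert (Ht1 : t < 1) by (pose proof (Hpos a); lra).
    split; [eexists; eauto|].
    rewrite Hmean, floor_nat_eq by lra.
    destruct (Req_dec t 0) as [T0|T0].
    + rewrite T0, ceil_nat_eq0. repeat split; try lra.
      intros k H1 _. destruct (Nat.eq_dec k (S a)). subst; auto. apply Hz; auto.
    + rewrite ceil_nat_eq1 by lra. repeat split; try lra. { unfold t; rewrite S_INR; lra. }
      intros k H1 H2; apply Hz; auto.
  - intros [Hmf [Hf [Hc Hz]]].
    assert (Hm0 : 0 <= mean p).
    { unfold mean. rewrite <- (Series_zero (fun _ => 0)) by auto. apply Series_le; auto.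
      intros k; split; [lra|]. apply Rmult_le_pos; [apply pos_INR|apply Hpos]. }
    set (f := floor_nat (mean p)) in *. set (c := ceil_nat (mean p)) in *.
    destruct (ceil_floor_rel (mean p) Hm0) as [E|E]; fold f c in E.
    + apply (fixed_2pt p f).
      * intros k H1 _. apply Hz; congruence.
      * rewrite (Hz (S f)) by lia. rewrite E in Hc. lra.
    + apply (fixed_2pt p f).
      * intros k H1 H2. apply Hz; congruence.
      * rewrite E in Hc. rewrite S_INR in Hc. lra.
Qed.
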